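(* Let $i<n$ be positive integers with $n\equiv\pm1\pmod i$ and let $g:=e^{-Z}e^{-X}\exp\big(-\sum_{1\le k<i}\binom{i}{k}E_{ki}\big)\in SL_n$. Then all entries of the matrix $g$ are integers.
   Context: Work over a field of characteristic $0$. $e_{jk}$ is the $n\times n$ matrix unit, with $e_{jk}:=0$ if $j$ or $k\notin[1,n]$; $p\bmod q\in[0,q-1]$. $\epsilon:=1$ if $n\bmod i=1$, else $\epsilon:=-1$; $c_k:=\lfloor(n-k)/i\rfloor$, $a_k:=\epsilon((-nk)\bmod i)$. For $k,\ell\in\mathbb{Z}$, $\xi_{k\ell}:=\sum_{p\in\mathbb{Z}}e_{k+ip,\ell+ip}$, and $E_{k\ell}:=\xi_{k+1,\ell+1}$ if $n\bmod i=1$, $E_{k\ell}:=-\xi_{i-\ell,i-k}$ otherwise. $X:=\sum_{1\le j\le n-i}c_je_{j,j+i}$ and $Z:=\sum_{1\le j<i}a_j\xi_{j+1,j}$. *)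

(* Defs.v *)
From HB Require Import structures.
From mathcomp Require Import all_boot all_order all_algebra.
Set Implicit Arguments. Unset Strict Implicit. Unset Printing Implicit Defensive.
Import Order.TTheory GRing.Theory Num.Theory.
Local Open Scope ring_scope.

Section Defs.
Variable F : fieldType.
Variables n i : nat.

(* 1-based position of an ordinal index *)
Definition pos (r : 'I_n) : int := (r.+1 : nat)%:Z.

(* matrix unit e_{jk}, = 0 if j or k is not in [1,n] *)
Definition emx (j k : int) : 'M[F]_n :=
  \matrix_(r, c) (((pos r == j) && (pos c == k))%:R : F).

(* xi_{kl} := sum_{p in Z} e_{k+ip, l+ip} (written out entrywise; at most
   one p contributes to each entry since i > 0) *)
Definition xi (k l : int) : 'M[F]_n :=
  \matrix_(r, c) ((
     ((pos r - k == pos c - l) && (i%:Z %| pos r - k)%Z))%:R : F).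

Definition eps : int := if (n %% i == 1)%N then 1 else -1.
Definition cc (k : nat) : nat := ((n - k) %/ i)%N.
Definition aa (k : nat) : int := eps * ((- (n%:Z * k%:Z)) %% i%:Z)%Z.

Definition EE (k l : int) : 'M[F]_n :=
  if (n %% i == 1)%N then xi (k + 1) (l + 1) else - xi (i%:Z - l) (i%:Z - k).

Definition XX : 'M[F]_n :=
  \sum_(1 <= j < (n - i).+1) (cc j)%:R *: emx j (j + i)%N.

Definition ZZ : 'M[F]_n :=
  \sum_(1 <= j < i) (aa j)%:~R *: xi (j.+1) j.

(* matrix powers and the exponential of a nilpotent n x n matrix:
   exp A = sum_{k < n} A^k / k!  (A^n = 0 for nilpotent A) *)
Definition mxpow (A : 'M[F]_n) (k : nat) : 'M[F]_n := iter k (mulmx A) 1%:M.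
Definition nilexp (A : 'M[F]_n) : 'M[F]_n :=
  \sum_(k < n) (k`!%:R)^-1 *: mxpow A k.

Definition gg : 'M[F]_n :=
  nilexp (- ZZ) *m nilexp (- XX) *m
  nilexp (- \sum_(1 <= k < i) 'C(i, k)%:R *: EE k i).
End Defs.

(* Main.v *)
Require Import Defs.
From HB Require Import structures.
From mathcomp Require Import all_boot all_order all_algebra zify ring.
Import Order.TTheory GRing.Theory Num.Theory.
Local Open Scope ring_scope.

Section Aux.
Variable F : fieldType.
Hypothesis charF0 : [pchar F] =i pred0.
Variable n : nat.

Definition isint (x : F) := exists z : int, x = z%:~R.

Lemma isint_sum (I : Type) (r : seq I) (P : pred I) (G : I -> F) :
  (forall j, P j -> isint (G j)) -> isint (\sum_(j <- r | P j) G j).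
Proof.
move=> H; apply: big_rec; first by exists 0.
move=> j x Pj [z ->]; have [w ->] := H j Pj; exists (w + z); by rewrite intrD.
Qed.

Lemma isintM x y : isint x -> isint y -> isint (x * y).
Proof. by move=> [a ->] [b ->]; exists (a * b); rewrite intrM. Qed.

Lemma isintN x : isint x -> isint (- x).
Proof. by move=> [a ->]; exists (- a); rewrite mulrNz. Qed.

Lemma isint_nat (b : nat) : isint (b%:R).
Proof. by exists b. Qed.

Definition intmx (A : 'M[F]_n) := forall r c, isint (A r c).

Lemma intmx_mul A B : intmx A -> intmx B -> intmx (A *m B).
Proof.
move=> hA hB r c; rewrite mxE; apply: isint_sum => j _; exact: isintM.
Qed.

Lemma nilexp_int (A : 'M[F]_n) :
  (forall k, (k < n)%N -> forall r c, exists z : int,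
      mxpow A k r c = (k`!%:Z * z)%:~R) -> intmx (nilexp A).
Proof.
move=> H r c; rewrite /nilexp summxE; apply: isint_sum => [[k hk]] _.
rewrite mxE /=; have [z ->] := H k hk r c.
exists z; rewrite intrM mulrA /= pmulrn mulVf ?mul1r //.
move/pcharf0P: charF0 => ->; by rewrite -lt0n fact_gt0.
Qed.

Definition shiftmx (f : int -> int) (d : int) : 'M[F]_n :=
  \matrix_(r, c) ((pos c == pos r + d)%:R * (f (pos r))%:~R).

Fixpoint Pw (f : int -> int) (d : int) (k : nat) (x : int) : int :=
  if k is k'.+1 then f x * Pw f d k' (x + d) else 1.

Lemma mxpow_shift (f : int -> int) (d : int) (k : nat) (r c : 'I_n) : d != 0 ->
  mxpow (shiftmx f d) k r c =
  (pos c == pos r + k%:Z * d)%:R * (Pw f d k (pos r))%:~R.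
Proof.
move=> d0; elim: k r c => [|k IH] r c.
  rewrite /mxpow /= mxE mulr1 mul0r addr0.
  suff -> : (r == c) = (pos c == pos r) by []. apply/idP/idP => /eqP h; apply/eqP; [by rewrite h | apply: val_inj; move: h; rewrite /pos /=; lia].
rewrite /mxpow /= -/(mxpow _ k) mxE.
have [inr|outr] := boolP ((0 < pos r + d) && (pos r + d <= n%:Z)).
  have hm : (absz (pos r + d)%R - 1 < n)%N by move: inr; rewrite /pos; lia.
  pose m0 : 'I_n := Ordinal hm.
  have pm0 : pos m0 = pos r + d. have e : pos m0 = Posz (absz (pos r + d) - 1).+1 by []. rewrite e; move: inr; lia.
  rewrite (bigD1 m0) //= big1 ?addr0.
    rewrite !mxE IH pm0 eqxx mul1r.
    have -> : (pos c == pos r + d + k%:Z * d) = (pos c == pos r + k.+1%:Z * d).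
      by apply/eqP/eqP; lia.
    by rewrite intrM /= mulrCA.
  move=> m hm0; rewrite !mxE.
  have -> : (pos m == pos r + d) = false.
    apply/negbTE; apply: contra hm0 => /eqP h; apply/eqP/val_inj.
    by move: h pm0; rewrite /pos /=; lia.
  by rewrite !mul0r.
rewrite big1.
  have -> : (pos c == pos r + k.+1%:Z * d) = false.
    apply/negbTE/eqP => h; move: outr h d0; rewrite /pos.
    have := ltn_ord c; have := ltn_ord r; nia.
  by rewrite mul0r.
move=> m _; rewrite !mxE.
have -> : (pos m == pos r + d) = false.
  apply/negbTE/eqP => h; move: outr h; rewrite /pos.
  have := ltn_ord m; lia.
by rewrite !mul0r.
Qed.

Lemma shift_int (f : int -> int) (d : int) : d != 0 ->
  (forall k x, (k < n)%N -> (k`!%:Z %| Pw f d k x)%Z) ->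
  intmx (nilexp (shiftmx f d)).
Proof.
move=> d0 H; apply: nilexp_int => k hk r c.
rewrite mxpow_shift //.
have /dvdzP [q hq] := H k (pos r) hk.
case: eqP => _; last by exists 0; rewrite mulr0 mul0r.
by exists q; rewrite mul1r hq mulrC.
Qed.

End Aux.
Lemma sum_delta (F : fieldType) (a b m : nat) (G : nat -> F) :
  \sum_(a <= j < b) (m == j)%:R * G j = if (a <= m < b)%N then G m else 0.
Proof.
elim: b => [|b IH]; first by rewrite big_geq // ltn0 andbF.
have [ab|ba] := leqP a b; last first.
  rewrite big_geq //; case: ifP => // /andP [h1 h2]; move: ba h1 h2; lia.
rewrite big_nat_recr //= IH.
case: (eqVneq m b) => [->|ne].
  rewrite mul1r ltnn andbF add0r ab ltnSn //.
rewrite mul0r addr0; congr (if _ then _ else _).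
by move: ne; lia.
Qed.

Section XPart.
Variable F : fieldType.
Variables n i : nat.
Hypothesis i_gt0 : (0 < i)%N.
Hypothesis i_lt_n : (i < n)%N.



Definition fX (x : int) : int :=
  if (0 < x) && (absz x + i <= n)%N then - (cc n i (absz x))%:Z else 0.

Lemma XX_shift : - XX F n i = shiftmx F n fX (Posz i).
Proof.
apply/matrixP => r c; rewrite !mxE /XX summxE.
under eq_bigr => j _ do rewrite !mxE.
have step : forall j : nat, (cc n i j)%:R * ((pos r == Posz j) && (pos c == Posz (j + i)%N))%:R
    = (r.+1 == j)%:R * ((pos c == pos r + Posz i)%:R * (cc n i j)%:R) :> F.
  move=> j; case: (eqVneq r.+1 j) => [<-|ne].
    by rewrite /pos eqxx /= PoszD mul1r mulrC.
  have -> : (pos r == Posz j) = false by apply/negbTE; rewrite /pos eqz_nat.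
  by rewrite mul0r mulr0.
under eq_bigr => j _ do rewrite step.
rewrite sum_delta /fX.
have -> : (0 < pos r) = true by [].
have -> : absz (pos r) = r.+1 by [].
case: ifP => h1; case: ifP => h2 /=.
- by rewrite intrN mulrN.
- by move: h1 h2; lia.
- by move: h1 h2; lia.
- by rewrite oppr0 mulr0.
Qed.

Lemma ccS j : (0 < j)%N -> (j + i <= n)%N -> cc n i j = (cc n i (j + i)).+1.
Proof.
move=> j0 ji; rewrite /cc.
have -> : (n - j = (n - (j + i)) + 1 * i)%N by lia.
by rewrite divnDMl // addn1.
Qed.

Lemma PwX k x : Pw fX (Posz i) k x = 0 \/ absz (Pw fX (Posz i) k x) = (cc n i (absz x)) ^_ k.
Proof.
elim: k x => [|k IH] x; first by right; rewrite ffactn0.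
rewrite /= {1}/fX; case: ifP => hx; last by left; rewrite mul0r.
case: (IH (x + Posz i)) => [->|h]; first by left; rewrite mulr0.
right; rewrite abszM h.
have -> : absz (fX x) = cc n i (absz x) by rewrite /fX hx abszN absz_nat.
have -> : absz (x + Posz i) = (absz x + i)%N by move: hx; lia.
rewrite (ccS (absz x)) ?ffactSS //; move: hx; lia.
Qed.

Lemma PwX_dvd k x : (k`!%:Z %| Pw fX (Posz i) k x)%Z.
Proof.
case: (PwX k x) => [->|h]; first exact: dvdz0.
by rewrite /dvdz unfold_in /= h -bin_ffact dvdn_mull.
Qed.

End XPart.

Lemma modz_char (x q r d : int) : 0 <= r < d -> x = q * d + r -> (x %% d)%Z = r.
Proof. by move=> h ->; rewrite modzMDl modz_small. Qed.

Section ZPart.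
Variable F : fieldType.
Variables n i : nat.
Hypothesis i_gt0 : (0 < i)%N.
Hypothesis i_lt_n : (i < n)%N.
Hypothesis n_pm1 : (n %% i == 1 %% i)%N || ((n + 1) %% i == 0)%N.

Definition sZ (x : int) : nat := absz ((x - 1) %% Posz i)%Z.

Lemma sZ_lt x : (sZ x < i)%N.
Proof. rewrite /sZ; lia. Qed.

Lemma sZ_pred x : (0 < sZ x)%N -> sZ (x - 1) = (sZ x).-1.
Proof.
rewrite /sZ => h.
have e := divz_eq (x - 1) (Posz i).
rewrite (@modz_char (x - 1 - 1) ((x - 1) %/ Posz i)%Z (((x - 1) %% Posz i)%Z - 1)); lia.
Qed.

Lemma dvd_sZ (x : int) (j : nat) : (j < i)%N ->
  (Posz i %| x - Posz j.+1)%Z = (sZ x == j).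
Proof.
move=> hj; rewrite /sZ.
set s := ((x - 1) %% Posz i)%Z; set q := ((x - 1) %/ Posz i)%Z.
have e : x - 1 = q * Posz i + s by rewrite /q /s -divz_eq.
have s0 : 0 <= s < Posz i by rewrite /s; lia.
have [sj|sj] := lerP (Posz j) s.
  have -> : (Posz i %| x - Posz j.+1)%Z = (s - Posz j == 0).
    apply/dvdz_mod0P/eqP; rewrite (@modz_char _ q (s - Posz j)) //; lia.
  apply/idP/idP => /eqP h; apply/eqP; lia.
have -> : (Posz i %| x - Posz j.+1)%Z = false.
  apply/negbTE/dvdz_mod0P; rewrite (@modz_char _ (q - 1) (s - Posz j + Posz i)); lia.
apply/esym/negbTE/eqP; lia.
Qed.

Definition fZ (x : int) : int := if (0 < sZ x)%N then - aa n i (sZ x) else 0.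

Lemma ZZ_shift : - ZZ F n i = shiftmx F n fZ (-1).
Proof.
apply/matrixP => r c; rewrite !mxE /ZZ summxE.
under eq_bigr => j _ do rewrite !mxE.
have step : forall j : nat, (1 <= j < i)%N ->
   (aa n i j)%:~R * ((pos r - Posz j.+1 == pos c - Posz j) && (Posz i %| pos r - Posz j.+1)%Z)%:R
    = (sZ (pos r) == j)%:R * ((pos c == pos r + -1)%:R * (aa n i j)%:~R) :> F.
  move=> j /andP [j1 ji].
  have -> : (pos r - Posz j.+1 == pos c - Posz j) = (pos c == pos r + -1).
    by apply/idP/idP => /eqP h; apply/eqP; lia.
  rewrite dvd_sZ //.
  case: (pos c == pos r + -1); case: (sZ (pos r) == j); by rewrite /= ?mulr1 ?mul1r ?mulr0 ?mul0r.
rewrite (eq_big_nat _ _ step) sum_delta /fZ sZ_lt andbT.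
case: ifP => h.
  by rewrite intrN mulrN.
by rewrite oppr0 mulr0.
Qed.

End ZPart.

Section ZPart2.
Variables n i : nat.
Hypothesis i_gt0 : (0 < i)%N.
Hypothesis i_lt_n : (i < n)%N.
Hypothesis n_pm1 : (n %% i == 1 %% i)%N || ((n + 1) %% i == 0)%N.

Lemma aa_case1 m : (n %% i == 1)%N -> (0 < m < i)%N -> aa n i m = Posz (i - m).
Proof.
move=> h hm; rewrite /aa /eps h mul1r.
have en : Posz n = Posz (n %/ i) * Posz i + 1.
  by rewrite [in LHS](divn_eq n i) (eqP h) PoszD PoszM.
rewrite (@modz_char _ (- (Posz (n %/ i) * Posz m) - 1) (Posz i - Posz m)); first lia.
  by move: hm; lia.
rewrite en; ring.
Qed.

Lemma aa_case2 m : (n %% i != 1)%N -> (0 < m < i)%N -> aa n i m = - Posz m.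
Proof.
move=> h hm; rewrite /aa /eps (negbTE h).
have h2 : ((n + 1) %% i == 0)%N.
  case/orP: n_pm1 => // h1; exfalso.
  case: (ltnP 1 i) => hi; first by move: h; rewrite (eqP h1) modn_small // eqxx.
  by move: hm hi; lia.
have en : Posz n = Posz ((n + 1) %/ i) * Posz i - 1.
  have := divn_eq (n + 1) i; rewrite (eqP h2) addn0 => e.
  apply/eqP; rewrite eq_sym subr_eq -PoszM -e; by rewrite PoszD.
rewrite (@modz_char _ (- (Posz ((n + 1) %/ i) * Posz m)) (Posz m)); first lia.
  by move: hm; lia.
rewrite en; ring.
Qed.

Lemma PwZ1 k x : (n %% i == 1)%N ->
  Pw (fZ n i) (-1) k x = 0 \/ absz (Pw (fZ n i) (-1) k x) = (i - sZ i x + k).-1 ^_ k.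
Proof.
move=> h; elim: k x => [|k IH] x; first by right; rewrite ffactn0.
rewrite /= {1}/fZ; case: ifP => hx; last by left; rewrite mul0r.
have sl : (sZ i x < i)%N by apply: (@sZ_lt n i i_gt0 i_lt_n n_pm1 x).
case: (IH (x + -1)) => [->|hk]; first by left; rewrite mulr0.
right; rewrite abszM hk.
have -> : absz (fZ n i x) = (i - sZ i x)%N.
  by rewrite /fZ hx aa_case1 ?hx ?sl // abszN absz_nat.
have -> : sZ i (x + -1) = (sZ i x).-1 by rewrite (@sZ_pred n i i_gt0 i_lt_n n_pm1).
have -> : (i - (sZ i x).-1 + k).-1 = (i - sZ i x + k)%N by lia.
have -> : (i - sZ i x + k.+1).-1 = (i - sZ i x + k)%N by lia.
rewrite ffactnSr mulnC; congr (_ * _)%N; lia.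
Qed.

Lemma PwZ2 k x : (n %% i != 1)%N ->
  absz (Pw (fZ n i) (-1) k x) = (sZ i x) ^_ k.
Proof.
move=> h; elim: k x => [|k IH] x; first by rewrite ffactn0.
rewrite /= {1}/fZ; case: ifP => hx.
  have sl : (sZ i x < i)%N by apply: (@sZ_lt n i i_gt0 i_lt_n n_pm1 x).
  rewrite abszM IH aa_case2 //; last by rewrite hx sl.
  have -> : sZ i (x + -1) = (sZ i x).-1 by rewrite (@sZ_pred n i i_gt0 i_lt_n n_pm1).
  by rewrite opprK absz_nat ffactnS.
rewrite mul0r /=; move/negbT: hx; rewrite -eqn0Ngt => /eqP ->.
by rewrite ffact0n.
Qed.

Lemma PwZ_dvd k x : (k`!%:Z %| Pw (fZ n i) (-1) k x)%Z.
Proof.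
case: (boolP (n %% i == 1)%N) => h.
  case: (PwZ1 k x h) => [->|e]; first exact: dvdz0.
  by rewrite /dvdz unfold_in /= e -bin_ffact dvdn_mull.
by rewrite /dvdz unfold_in /= PwZ2 // -bin_ffact dvdn_mull.
Qed.

End ZPart2.

Section WPart.
Variable F : fieldType.
Hypothesis charF0 : [pchar F] =i pred0.
Variables n i : nat.
Hypothesis i_gt0 : (0 < i)%N.
Hypothesis i_lt_n : (i < n)%N.

Lemma dvd_contra (a b : int) : (Posz i %| a)%Z -> (Posz i %| b)%Z -> 0 < a - b < Posz i -> False.
Proof.
move=> ha hb h; have hd : (Posz i %| a - b)%Z by rewrite rpredB.
move: hd; rewrite /dvdz unfold_in /= => hd.
have h0 : (0 < absz (a - b))%N by lia.
have := dvdn_leq h0 hd; lia.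
Qed.

Definition WW : 'M[F]_n := \sum_(1 <= k < i) 'C(i, k)%:R *: EE F n i k i.

Lemma WW_entry r c : WW r c = \sum_(1 <= k < i) 'C(i, k)%:R * EE F n i k i r c.
Proof. by rewrite /WW summxE; apply: eq_bigr => k _; rewrite mxE. Qed.

Lemma WW_int : intmx F n (- WW).
Proof.
move=> r c; rewrite mxE WW_entry; apply: isintN; apply: isint_sum => k _.
apply: isintM; first exact: isint_nat.
rewrite /EE; case: ifP => _; rewrite ?mxE; last apply: isintN; exact: isint_nat.
Qed.

Lemma WW_sq : WW *m WW = 0.
Proof.
apply/matrixP => r c; rewrite !mxE; apply: big1 => m _.
rewrite !WW_entry.
case: (boolP (n %% i == 1)%N) => h.
  case: (boolP (Posz i %| pos m - 1)%Z) => hm.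
    rewrite [X in _ * X]big1_seq ?mulr0 // => k /andP [_]; rewrite mem_index_iota => /andP [k1 ki].
    rewrite /EE h mxE.
    case: (boolP (Posz i %| pos m - Posz (k + 1))%Z) => hk; last by rewrite andbF mulr0.
    exfalso; apply: (dvd_contra _ _ hm hk); lia.
  rewrite [X in X * _]big1_seq ?mul0r // => k /andP [_]; rewrite mem_index_iota => /andP [k1 ki].
  rewrite /EE h mxE.
  case: (boolP ((pos r - Posz (k + 1) == pos m - Posz (i + 1)) && (Posz i %| pos r - Posz (k + 1))%Z)) => hk; last by rewrite mulr0.
  exfalso; move/andP: hk => [/eqP e hk]; move/negP: hm; apply.
  have -> : pos m - 1 = (pos r - Posz (k + 1)) + Posz i by lia.
  by rewrite rpredD // dvdzz.
case: (boolP (Posz i %| pos m)%Z) => hm.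
  rewrite [X in X * _]big1_seq ?mul0r // => k /andP [_]; rewrite mem_index_iota => /andP [k1 ki].
  rewrite /EE (negbTE h) !mxE.
  case: (boolP ((pos r - (Posz i - Posz i) == pos m - (Posz i - Posz k)) && (Posz i %| pos r - (Posz i - Posz i))%Z)) => hk; last by rewrite ?(negbTE hk) ?andbF /= ?mulr0n ?oppr0 ?mulr0.
  exfalso; move/andP: hk => [/eqP e hk]; apply: (dvd_contra _ _ hm hk); lia.
rewrite [X in _ * X]big1_seq ?mulr0 // => k /andP [_]; rewrite mem_index_iota => /andP [k1 ki].
rewrite /EE (negbTE h) !mxE.
case: (boolP (Posz i %| pos m - (Posz i - Posz i))%Z) => hk; last by rewrite ?(negbTE hk) ?andbF /= ?mulr0n ?oppr0 ?mulr0.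
exfalso; move/negP: hm; apply; move: hk; by rewrite subrr subr0.
Qed.

Lemma WW_exp : intmx F n (nilexp (- WW)).
Proof.
apply: nilexp_int => // k hk r c.
case: k hk => [|[|k]] hk.
- by exists (r == c)%:Z; rewrite /mxpow /= mxE mul1r.
- have [z hz] := WW_int r c; exists z; by rewrite /mxpow /= mulmx1 hz mul1r.
- have e : (- WW) *m (- WW) = 0 by rewrite mulNmx mulmxN opprK WW_sq.
  exists 0; rewrite mulr0 /mxpow /= mulmxA e mul0mx mxE //.
Qed.

End WPart.

Theorem proposition4p5 (F : fieldType) (charF0 : [pchar F] =i pred0)
  (n i : nat) (i_gt0 : (0 < i)%N) (i_lt_n : (i < n)%N)
  (n_pm1 : (n %% i == 1 %% i)%N || ((n + 1) %% i == 0)%N) :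
  forall r c : 'I_n, exists z : int, gg F n i r c = z%:~R.
Proof.
have H : intmx F n (gg F n i).
  rewrite /gg (ZZ_shift F n i i_gt0 i_lt_n n_pm1) (XX_shift F n i i_gt0 i_lt_n).
  apply: intmx_mul; first apply: intmx_mul.
  - apply: shift_int => //.
    move=> k x _; exact: (PwZ_dvd n i i_gt0 i_lt_n n_pm1).
  - apply: shift_int => //; first by rewrite eqz_nat -lt0n.
    move=> k x _; exact: (PwX_dvd n i i_gt0 i_lt_n).
  - exact: (WW_exp F charF0 n i i_gt0 i_lt_n).
exact: H.
Qed.
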